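(* For integers $0\le k\le n$, $$\frac{[n]!}{[k]!\cdot F^k([n-k]!)}=\sum_{S}\mathrm{wt}(S),$$ where the sum runs over all $k$-element subsets $S$ of $\{1,\ldots,n\}$.
   Context: Work in $\mathbb{Q}(x_1,x_2,\ldots)$ with the field endomorphism $F$ given by $F(x_i)=x_{i+1}$. Define $[n]:=x_1+\cdots+x_n$, $[0]!:=1$, $[n]!:=[n]\cdot F([n-1]!)=\prod_{j=0}^{n-1}F^j[n-j]$. For a $k$-element set $S=\{i_1>i_2>\cdots>i_k\}$ of positive integers, $\mathrm{wt}(S):=\frac{\prod_{j=1}^k F^{i_j-1}[j]}{[k]!}$, with $\mathrm{wt}(\emptyset)=1$. *)

(* Defs.v *)
From mathcomp Require Import all_boot all_order all_algebra.
From mathcomp Require Import fraction.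
From mathcomp.multinomials Require Import mpoly.
Set Implicit Arguments. Unset Strict Implicit. Unset Printing Implicit Defensive.
Import GRing.Theory.
Local Open Scope ring_scope.

(* Q(x_1,...,x_N), realised as the fraction field of Q[x_1..x_N].
   Convention: index i : nat (0-based) stands for the paper's x_{i+1}. *)
Definition K (N : nat) := {fraction {mpoly rat[N]}}.

(* the variable x_{i+1} (0 if out of range; never used out of range below) *)
Definition xv (N i : nat) : K N :=
  match (insub i : option 'I_N) with
  | Some j => tofrac ('X_j : {mpoly rat[N]})
  | None => 0
  end.

(* br N j m = F^j [m] = x_{j+1} + ... + x_{j+m} *)
Definition br (N j m : nat) : K N := \sum_(i < m) xv N (j + i).

(* fac N j m = F^j ([m]!) = prod_{t=0}^{m-1} F^(j+t) [m-t] *)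
Definition fac (N j m : nat) : K N := \prod_(t < m) br N (j + t) (m - t).

(* wt(S) for S a subset of {1..n}, encoded as S : {set 'I_n} (i : 'I_n is i+1).
   s = elements of S (0-based) sorted decreasingly, so nth 0 s (j-1) = i_j - 1;
   wt(S) = prod_{j=1}^k F^(i_j - 1)[j] / [k]! *)
Definition wt (N n : nat) (S : {set 'I_n}) : K N :=
  let s := sort (fun a b : nat => (b <= a)%N) [seq val i | i <- enum S] in
  (\prod_(j < #|S|) br N (nth 0%N s j) j.+1) / fac N 0 #|S|.

(* Main.v *)
Require Import Defs.
From mathcomp Require Import all_boot all_order all_algebra.
From mathcomp Require Import fraction.
From mathcomp.multinomials Require Import mpoly.
From mathcomp Require Import zify.
Import GRing.Theory Num.Theory.
Set Implicit Arguments. Unset Strict Implicit. Unset Printing Implicit Defensive.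
Local Open Scope ring_scope.

Lemma br_add N j a b : br N j (a + b) = br N j a + br N (j + a) b.
Proof.
rewrite /br big_split_ord /=; congr (_ + _); apply: eq_bigr => i _ /=.
by rewrite addnA.
Qed.

Lemma br0 N j : br N j 0 = 0.
Proof. by rewrite /br big_ord0. Qed.

Definition pv N i : {mpoly rat[N]} :=
  match (insub i : option 'I_N) with Some j => 'X_j | None => 0 end.

Lemma br_neq0 N j m : (0 < m)%N -> (j + m <= N)%N -> br N j m != 0.
Proof.
move=> m0 jm.
have -> : br N j m = tofrac (\sum_(i < m) pv N (j + i)).
  rewrite rmorph_sum /=; apply: eq_bigr => i _.
  by rewrite /xv /pv; case: insub => [a|] //=; rewrite tofrac0.
rewrite tofrac_eq0; apply/negP => /eqP /(congr1 (meval (fun _ => (1:rat)))).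
rewrite raddf_sum meval0 /=.
rewrite (eq_bigr (fun _ => 1)); last first.
  move=> i _; rewrite /pv insubT; first by rewrite (leq_trans _ jm) // ltn_add2l.
  by move=> ? ; rewrite mevalXU.
by rewrite sumr_const card_ord => /eqP; rewrite -[0]/(0%:R) eqr_nat; case: m m0 jm.
Qed.

Lemma fac_neq0 N j m : (j + m <= N)%N -> fac N j m != 0.
Proof.
move=> h; rewrite /fac; apply/prodf_neq0 => t _; apply: br_neq0.
  by rewrite subn_gt0.
by rewrite -addnA subnKC ?(ltnW (ltn_ord t)).
Qed.

Lemma fac_split N n k : (k <= n)%N ->
  fac N 0 n = (\prod_(t < k) br N t (n - t)) * fac N k (n - k).
Proof.
move=> kn; rewrite /fac.
have H m : \prod_(t < k + m) br N (0 + t) (k + m - t) =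
  (\prod_(t < k) br N t (k + m - t)) * \prod_(t < m) br N (k + t) (m - t).
  rewrite big_split_ord /=; congr (_ * _).
  by apply: eq_bigr => i _; rewrite add0n subnDA addKn.
by have := H (n - k)%N; rewrite subnKC.
Qed.

Definition srt n (S : {set 'I_n}) :=
  sort (fun a b : nat => (b <= a)%N) [seq val i | i <- enum S].
Definition fw N n (S : {set 'I_n}) : K N :=
  \prod_(j < #|S|) br N (nth 0%N (srt S) j) j.+1.

Lemma wtE N n (S : {set 'I_n}) : wt N S = fw N S / fac N 0 #|S|.
Proof. by []. Qed.

Lemma size_srt n (S : {set 'I_n}) : size (srt S) = #|S|.
Proof. by rewrite /srt size_sort size_map cardE. Qed.

Lemma srtU1 n (S : {set 'I_n}) (i0 : 'I_n) :
  (forall i, i \in S -> (i0 < i)%N) -> srt (i0 |: S) = rcons (srt S) i0.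
Proof.
move=> hS.
have tr : transitive (fun a b : nat => (b <= a)%N).
  by move=> a b c h1 h2; apply: leq_trans h2 h1.
have an : antisymmetric (fun a b : nat => (b <= a)%N).
  by move=> a b /andP[h1 h2]; apply/eqP; rewrite eqn_leq h1 h2.
have tot : total (fun a b : nat => (b <= a)%N) by move=> a b; apply: leq_total.
have i0S : i0 \notin S by apply/negP => /hS; rewrite ltnn.
apply: (sorted_eq tr an).
- exact: sort_sorted.
- have := sort_sorted tot [seq val i | i <- enum S]; rewrite -/(srt S).
  case E: (srt S) => [|x s] //= pth.
  rewrite rcons_path pth /=.
  have : last x s \in srt S by rewrite E mem_last.
  rewrite mem_sort => /mapP[j]; rewrite mem_enum => /hS h ->.
  exact: ltnW.
- rewrite perm_sort perm_sym perm_rcons.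
  apply: (@perm_trans _ (val i0 :: [seq val i | i <- enum S])).
    by rewrite perm_cons /srt perm_sort.
  rewrite -map_cons; apply: perm_map.
  apply: uniq_perm; [by rewrite /= mem_enum i0S enum_uniq | exact: enum_uniq | ].
  by move=> x; rewrite in_cons !mem_enum in_setU1.
Qed.

Lemma fwU1 N n (S : {set 'I_n}) (i0 : 'I_n) :
  (forall i, i \in S -> (i0 < i)%N) ->
  fw N (i0 |: S) = fw N S * br N i0 (#|S|).+1.
Proof.
move=> hS.
have i0S : i0 \notin S by apply/negP => /hS; rewrite ltnn.
rewrite /fw cardsU1 i0S add1n big_ord_recr /= srtU1 // nth_rcons size_srt ltnn eqxx.
congr (_ * _); apply: eq_bigr => j _; by rewrite nth_rcons size_srt ltn_ord.
Qed.

Definition Rs N n lo k : K N :=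
  \sum_(S : {set 'I_n} | (#|S| == k) && [forall i in S, lo <= val i]%N) fw N S.

Lemma Rs_eq N n m k : (m <= n)%N ->
  Rs N n (n - m) k = \prod_(t < k) br N (n - m + t) (m - t).
Proof.
elim: m k => [|m IH] k hm.
  rewrite subn0 /Rs; case: k => [|k].
    rewrite big_ord0 (eq_bigl (fun S => S == set0)); first by rewrite big_pred1_eq /fw cards0 big_ord0.
    move=> S; rewrite cards_eq0; case: eqP => //= ->.
    by apply/forall_inP => i; rewrite in_set0.
  rewrite big_pred0; last first.
    move=> S; apply/negP => /andP[c /forall_inP f].
    have S0 : S = set0.
      apply/setP => i; rewrite in_set0; apply/negP => /f; rewrite leqNgt ltn_ord //.
    by move: c; rewrite S0 cards0.
  by rewrite big_ord_recl /= sub0n br0 mul0r.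
set lo := (n - m.+1)%N.
have hlo : (n - m = lo.+1)%N by rewrite /lo; lia.
have lon : (lo < n)%N by rewrite /lo; lia.
have := IH k (ltnW hm); rewrite hlo => IHk.
have IHk' := IH k.-1 (ltnW hm); rewrite hlo in IHk'.
pose i0 : 'I_n := Ordinal lon.
rewrite /Rs (bigID (fun S : {set 'I_n} => i0 \in S)) /=.
rewrite [X in _ + X](eq_bigl (fun S : {set 'I_n} => (#|S| == k) && [forall i in S, lo.+1 <= val i]%N)); last first.
  move=> S; apply/idP/idP.
    move=> /andP[/andP[c /forall_inP f] ni]; rewrite c /=; apply/forall_inP => i iS.
    have := f i iS; rewrite leq_eqVlt => /orP[/eqP e|//].
    have ii : i = i0 by apply: val_inj; rewrite /= e.
    by rewrite -ii iS in ni.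
  move=> /andP[c /forall_inP f]; rewrite c /=; apply/andP; split.
    by apply/forall_inP => i /f /ltnW.
  by apply/negP => /f /=; rewrite ltnn.
rewrite -/(Rs N n lo.+1 k) IHk.
case: k IHk IHk' => [|k] IHk IHk' /=.
  rewrite !big_ord0 big_pred0 ?add0r // => S; apply/negP.
  by move=> /andP[/andP[/eqP /cards0_eq -> _]]; rewrite in_set0.
rewrite (reindex_onto (fun S' => i0 |: S') (fun S => S :\ i0)); last first.
  by move=> S /andP[_ iS]; rewrite setD1K.
rewrite (eq_bigl (fun S : {set 'I_n} => (#|S| == k) && [forall i in S, lo.+1 <= val i]%N)); last first.
  move=> S; apply/idP/idP.
    move=> /andP[/andP[/andP[c /forall_inP f] _] /eqP e].
    have ni : i0 \notin S by rewrite -e setD11.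
    move: c; rewrite cardsU1 ni add1n eqSS => -> /=.
    apply/forall_inP => i iS.
    have := f i (setU1r _ iS); rewrite leq_eqVlt => /orP[/eqP e'|//].
    have ii : i = i0 by apply: val_inj; rewrite /= e'.
    by rewrite -ii iS in ni.
  move=> /andP[c /forall_inP f].
  have ni : i0 \notin S by apply/negP => /f /=; rewrite ltnn.
  rewrite cardsU1 ni add1n eqSS c setU11 setU1K // eqxx !andbT /=.
  apply/forall_inP => i; rewrite in_setU1 => /orP[/eqP -> //|/f /ltnW //].
rewrite (eq_bigr (fun S => fw N S * br N lo k.+1)); last first.
  move=> S /andP[/eqP c /forall_inP f]; rewrite fwU1 ?c //.
rewrite -mulr_suml -/(Rs N n lo.+1 k) IHk' /=.
set P := \prod_(t < k) br N (lo.+1 + t) (m - t).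
rewrite [RHS]big_ord_recl [X in _ + X]big_ord_recr /=.
have -> : \prod_(i < k) br N (lo + bump 0 i) (m.+1 - bump 0 i) = P.
  by apply: eq_bigr => i _; rewrite /bump leq0n add1n addnS subSS.
case: (leqP k m) => km.
  rewrite addn0 subn0 -mulrDr mulrC; congr (_ * _).
  have -> : m.+1 = (k.+1 + (m - k))%N by rewrite addSn subnKC.
  by rewrite br_add addnS -addSn.
have P0 : P = 0.
  apply/eqP/prodf_eq0; exists (Ordinal km) => //=.
  by rewrite subnn br0.
by rewrite -/P P0 !mul0r mulr0 addr0.
Qed.

Unset Implicit Arguments.
Theorem proposition4p2 (N n k : nat) (hkn : (k <= n)%N) (hnN : (n <= N)%N) :
  fac N 0 n / (fac N 0 k * fac N k (n - k)) =
  \sum_(S : {set 'I_n} | #|S| == k) wt N S.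
Proof.
rewrite (fac_split N hkn) [fac N 0 k * _]mulrC invfM mulrA mulfK; last first.
  by apply: fac_neq0; rewrite subnKC.
rewrite (eq_bigr (fun S => fw N S / fac N 0 k)); last by move=> S /eqP <-.
rewrite -mulr_suml; congr (_ / _).
have := Rs_eq N k (leqnn n); rewrite subnn /Rs => <-.
apply: eq_bigl => S.
by rewrite andb_idr // => _; apply/forall_inP.
Qed.
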